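(* Let $P,Q$ be probability distributions on a finite set $\mathcal{X}$, $\delta\in(0,1)$, and assume $\sum_x\min\{P(x),Q(x)\}<1-\delta$. Let $\lambda_P$ be such that $\tilde P(x) := \min\{P(x),\lambda_P Q(x)\}$ satisfies $\sum_x\tilde P(x) = 1-\delta$, and let $\lambda_Q$ be such that $\tilde Q(x) := \min\{Q(x),\tilde P(x)/\lambda_Q\}$ satisfies $\sum_x\tilde Q(x)=1-\delta$. Then $\lambda_P\ge1\ge\lambda_Q$, and for every $\alpha>1$, the pair $(P',Q') = (\tilde P/(1-\delta),\tilde Q/(1-\delta))$ attains the infimum defining the approximate Rényi divergence, i.e. $$D^\delta_\alpha(P\|Q) = D_\alpha\!\left(\tfrac{\tilde P}{1-\delta}\,\Big\|\,\tfrac{\tilde Q}{1-\delta}\right).$$ In particular the minimizing pair does not depend on $\alpha$.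
   Context: For $\alpha>1$, $D_\alpha(P\|Q)=\frac{1}{\alpha-1}\log\sum_x P(x)^\alpha Q(x)^{1-\alpha}$ (infinite if $P$ is not absolutely continuous w.r.t. $Q$), and $D^\delta_\alpha(P\|Q)=\inf\{D_\alpha(P'\|Q'): P=(1-\delta)P'+\delta P'',\ Q=(1-\delta)Q'+\delta Q''\}$ over probability distributions $P',P'',Q',Q''$, equivalently over distributions $P',Q'$ with $P'\le P/(1-\delta)$ and $Q'\le Q/(1-\delta)$ pointwise. *)

(* Defs.v *)
From HB Require Import structures.
From mathcomp Require Import all_boot all_order all_algebra.
From mathcomp Require Import all_classical all_reals all_analysis.
Set Implicit Arguments. Unset Strict Implicit. Unset Printing Implicit Defensive.
Import Order.TTheory GRing.Theory Num.Theory.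
Local Open Scope ring_scope.

Definition is_distr (R : realType) (X : finType) (P : X -> R) : Prop :=
  (forall x, 0 <= P x) /\ \sum_(x : X) P x = 1.

(* Renyi divergence of order a (> 1): +oo unless P << Q; otherwise
   1/(a-1) * ln (sum_x P(x)^a Q(x)^(1-a)), terms with P(x) = 0 contributing 0
   (with powR, 0 `^ a = 0 for a <> 0). *)
Definition renyi (R : realType) (X : finType) (a : R) (P Q : X -> R) : \bar R :=
  if [forall x, (Q x == 0) ==> (P x == 0)]
  then ((a - 1)^-1 * ln (\sum_(x : X) (P x `^ a) * (Q x `^ (1 - a))))%:E
  else +oo%E.

Definition approx_renyi (R : realType) (X : finType) (delta a : R) (P Q : X -> R)
  : \bar R :=
  ereal_inf [set r | exists P' P'' Q' Q'' : X -> R,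
    [/\ is_distr P', is_distr P'', is_distr Q' & is_distr Q''] /\
    (forall x, P x = (1 - delta) * P' x + delta * P'' x) /\
    (forall x, Q x = (1 - delta) * Q' x + delta * Q'' x) /\
    r = renyi a P' Q'].

(* Main.v *)
Require Import Defs.
From HB Require Import structures.
From mathcomp Require Import all_boot all_order all_algebra.
From mathcomp Require Import all_classical all_reals all_analysis.
From mathcomp Require Import ring lra.
Import Order.TTheory GRing.Theory Num.Theory.
Local Open Scope ring_scope.
Section Aux.
Variable R : realType.
Implicit Types a p q r t : R.

Lemma hom_powR a p q : 0 <= p -> 0 < q ->
  p `^ a * q `^ (1 - a) = (p / q) `^ a * q.
Proof.
move=> p0 q0.
have -> : p `^ a = (p / q) `^ a * q `^ a.
  rewrite -powRM ?divr_ge0 ?(ltW q0) //; congr (_ `^ _); field; by rewrite gt_eqF.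
rewrite -mulrA -powRD; last by apply/implyP => _; rewrite gt_eqF.
by rewrite addrC subrK powRr1 ?ltW.
Qed.

Lemma young_tan a t r : 1 < a -> 0 <= t -> 0 <= r ->
  a * r `^ (a - 1) * t <= t `^ a + (a - 1) * r `^ a.
Proof.
move=> a1 t0 r0.
have a0 : 0 < a by lra.
have am1 : 0 < a - 1 by lra.
have q0 : 0 < a / (a - 1) by rewrite divr_gt0.
have pq : a^-1 + (a / (a - 1))^-1 = 1.
  by rewrite invf_div; field; rewrite gt_eqF.
have := conjugate_powR (powR_ge0 r (a - 1)) t0 q0 a0.
rewrite addrC pq => /(_ erefl).
rewrite -powRrM mulrCA mulfV ?gt_eqF // mulr1 invf_div => h.
have h2 := ler_wpM2l (ltW a0) h.
have e : a * (r `^ a * ((a - 1) / a) + t `^ a / a) = t `^ a + (a - 1) * r `^ a.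
  by field; rewrite gt_eqF.
by rewrite -mulrA -e.
Qed.

Lemma tangent a p q r : 1 < a -> 0 <= p -> 0 <= q -> 0 <= r -> (q = 0 -> p = 0) ->
  a * r `^ (a - 1) * p - (a - 1) * r `^ a * q <= p `^ a * q `^ (1 - a).
Proof.
move=> a1 p0 q0 r0 qp.
have [qe|qgt] := eqVneq q 0.
  rewrite (qp qe) qe !mulr0 subr0 powR0 ?mul0r //; rewrite gt_eqF //; lra.
have q0' : 0 < q by rewrite lt_neqAle eq_sym qgt q0.
rewrite hom_powR //.
have h := young_tan a (p/q) r a1 (divr_ge0 p0 q0) r0.
have h2 := ler_wpM2r q0 h.
have e1 : a * r `^ (a - 1) * (p / q) * q = a * r `^ (a - 1) * p.
  by field; rewrite gt_eqF.
rewrite e1 mulrDl in h2.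
lra.
Qed.

Lemma sum_tangent (X : finType) a A B (p q p' q' r : X -> R) :
  1 < a -> 0 <= B ->
  (forall x, 0 <= p' x) -> (forall x, 0 <= q' x) -> (forall x, q' x = 0 -> p' x = 0) ->
  \sum_x p' x = \sum_x p x -> \sum_x q' x = \sum_x q x ->
  (forall x, p x `^ a * q x `^ (1 - a) =
     a * r x `^ (a - 1) * p x - (a - 1) * r x `^ a * q x) ->
  (forall x, r x = A \/ (r x <= A /\ p' x <= p x)) ->
  (forall x, r x = B \/ (B <= r x /\ q' x <= q x)) ->
  \sum_x p x `^ a * q x `^ (1 - a) <= \sum_x p' x `^ a * q' x `^ (1 - a).
Proof.
move=> a1 B0 p'0 q'0 ac sp sq E hA hB.
have r0 : forall x, 0 <= r x.
  by move=> x; case: (hB x) => [->|[h _]] //; exact: le_trans h.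
apply: (@le_trans _ _ (\sum_x (a * r x `^ (a - 1) * p' x - (a - 1) * r x `^ a * q' x))); last first.
  by apply: ler_sum => x _; apply: tangent => //; first [exact: p'0 | exact: q'0 | exact: r0 | exact: ac].
apply: (@le_trans _ _ (\sum_x (p x `^ a * q x `^ (1 - a) + a * A `^ (a - 1) * (p' x - p x)
    - (a - 1) * B `^ a * (q' x - q x)))).
  rewrite big_split /= big_split /= sumrN -!mulr_sumr !sumrB sp sq !subrr !mulr0 oppr0 !addr0.
  by [].
apply: ler_sum => x _; rewrite E.
have h1 : 0 <= (r x `^ (a - 1) - A `^ (a - 1)) * (p' x - p x).
  case: (hA x) => [->|[rA pp]]; first by rewrite subrr mul0r.
  apply: mulr_le0; rewrite subr_le0 //.
  by apply: ge0_ler_powR; rewrite ?nnegrE ?(r0 x) //; try lra; apply: le_trans rA.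
have h2 : (r x `^ a - B `^ a) * (q' x - q x) <= 0.
  case: (hB x) => [->|[rB qq]]; first by rewrite subrr mul0r.
  apply: mulr_ge0_le0; rewrite ?subr_le0 ?subr_ge0 //.
  by apply: ge0_ler_powR; rewrite ?nnegrE ?(r0 x) //; lra.
nra.
Qed.

Definition ptf lP u v : R := Num.min u (lP * v).
Definition qtf lP lQ u v : R := Num.min v (ptf lP u v / lQ).
Definition rf lP lQ u v : R :=
  if qtf lP lQ u v == 0 then (if v == 0 then lP else lQ)
  else ptf lP u v / qtf lP lQ u v.

Section PW.
Variables (lP lQ c u v u' v' : R).
Hypotheses (hlP : 1 < lP) (hlQ0 : 0 < lQ) (hlQ1 : lQ <= 1) (c0 : 0 < c)
  (u0 : 0 <= u) (v0 : 0 <= v) (hu' : u' <= u / c) (hv' : v' <= v / c).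

Local Ltac lra' := have := hlP; have := hlQ0; have := hlQ1; have := c0;
  have := u0; have := v0; intros; lra.
Local Ltac nra' := have := hlP; have := hlQ0; have := hlQ1; have := c0;
  have := u0; have := v0; intros; nra.

Lemma pw_pt0 : 0 <= ptf lP u v.
Proof. have hl : 0 <= lP by lra'. by rewrite /ptf le_min u0 mulr_ge0. Qed.

Lemma pw_qt0 : 0 <= qtf lP lQ u v.
Proof. by rewrite /qtf le_min v0 divr_ge0 ?pw_pt0 ?ltW. Qed.

Lemma pw_ac : qtf lP lQ u v = 0 -> ptf lP u v = 0.
Proof.
move=> hq; apply/eqP; rewrite eq_le pw_pt0 andbT.
have : qtf lP lQ u v <= 0 by rewrite hq.
rewrite /qtf ge_min => /orP[hv|hp].
  have -> : v = 0 by lra'.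
  by rewrite /ptf ge_min mulr0 lexx orbT.
by rewrite ler_pdivrMr // mul0r in hp.
Qed.

Lemma pw_E a : 1 < a ->
  (ptf lP u v / c) `^ a * (qtf lP lQ u v / c) `^ (1 - a) =
  a * rf lP lQ u v `^ (a - 1) * (ptf lP u v / c)
  - (a - 1) * rf lP lQ u v `^ a * (qtf lP lQ u v / c).
Proof.
move=> a1; have [hq|hq] := eqVneq (qtf lP lQ u v) 0.
  rewrite (pw_ac hq) hq !mul0r !mulr0 subrr powR0 ?mul0r //.
  by rewrite gt_eqF //; lra'.
have qt0 : 0 < qtf lP lQ u v by rewrite lt_neqAle eq_sym hq pw_qt0.
rewrite /rf (negbTE hq).
set rr := ptf lP u v / qtf lP lQ u v.
have rr0 : 0 <= rr by rewrite divr_ge0 ?pw_pt0 ?ltW.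
have pcE : ptf lP u v / c = rr * (qtf lP lQ u v / c).
  by rewrite /rr; field; rewrite !gt_eqF.
rewrite hom_powR ?divr_ge0 ?pw_pt0 ?ltW ?divr_gt0 //.
have -> : ptf lP u v / c / (qtf lP lQ u v / c) = rr.
  by rewrite /rr; field; rewrite !gt_eqF.
rewrite pcE -(mulr_powRB1 rr0 (_ : 0 < a)); last by lra'.
ring.
Qed.

Lemma pw_A : rf lP lQ u v = lP \/ (rf lP lQ u v <= lP /\ u' <= ptf lP u v / c).
Proof.
rewrite /rf; have [hq|hq] := eqVneq (qtf lP lQ u v) 0.
  have [hv|hv] := eqVneq v 0; first by left.
  right; split; first lra'.
  have v0' : 0 < v by rewrite lt_neqAle eq_sym hv v0.
  have hpt := pw_ac hq.
  have hu : u <= 0.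
    rewrite leNgt; apply/negP => hu.
    have : 0 < ptf lP u v by rewrite /ptf lt_min hu mulr_gt0 //; lra'.
    by rewrite hpt ltxx.
  have hu0 : u = 0 by lra'.
  by rewrite hpt mul0r; move: hu'; rewrite hu0 mul0r.
have qt0 : 0 < qtf lP lQ u v by rewrite lt_neqAle eq_sym hq pw_qt0.
have [hv|hv] := leP v (ptf lP u v / lQ).
  have hqt : qtf lP lQ u v = v by rewrite /qtf min_l.
  rewrite hqt in qt0 *.
  have [hu|hu] := leP u (lP * v).
    have hpt : ptf lP u v = u by rewrite /ptf min_l.
    by right; rewrite hpt ler_pdivrMr // mulrC.
  have hpt : ptf lP u v = lP * v by rewrite /ptf min_r // ltW.
  by left; rewrite hpt mulfK // gt_eqF.
have hqt : qtf lP lQ u v = ptf lP u v / lQ by rewrite /qtf min_r // ltW.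
have pt0 : 0 < ptf lP u v.
  by rewrite lt_neqAle eq_sym pw_pt0 andbT; apply/eqP => h; move: hq; rewrite hqt h mul0r eqxx.
right; split.
  have e : ptf lP u v / (ptf lP u v / lQ) = lQ by field; rewrite !gt_eqF.
  rewrite hqt e; lra'.
have [hu|hu] := leP u (lP * v).
  by rewrite /ptf min_l.
exfalso.
have hpt : ptf lP u v = lP * v by rewrite /ptf min_r // ltW.
rewrite ltr_pdivrMr // hpt in hv.
nra'.
Qed.

Lemma pw_B : rf lP lQ u v = lQ \/ (lQ <= rf lP lQ u v /\ v' <= qtf lP lQ u v / c).
Proof.
rewrite /rf; have [hq|hq] := eqVneq (qtf lP lQ u v) 0.
  have [hv|hv] := eqVneq v 0; last by left.
  right; split; first lra'.
  by move: hv'; rewrite hq hv !mul0r.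
have qt0 : 0 < qtf lP lQ u v by rewrite lt_neqAle eq_sym hq pw_qt0.
have [hv|hv] := leP v (ptf lP u v / lQ).
  have hqt : qtf lP lQ u v = v by rewrite /qtf min_l.
  rewrite hqt in qt0 *.
  by right; rewrite ler_pdivlMr // mulrC -ler_pdivlMr.
have hqt : qtf lP lQ u v = ptf lP u v / lQ by rewrite /qtf min_r // ltW.
have pt0 : 0 < ptf lP u v.
  by rewrite lt_neqAle eq_sym pw_pt0 andbT; apply/eqP => h; move: hq; rewrite hqt h mul0r eqxx.
have e : ptf lP u v / (ptf lP u v / lQ) = lQ by field; rewrite !gt_eqF.
by left; rewrite hqt e.
Qed.
End PW.
End Aux.
Arguments ptf {R}. Arguments qtf {R}. Arguments rf {R}.
Arguments pw_pt0 {R lP lQ c u v}. Arguments pw_qt0 {R lP lQ c u v}.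
Arguments pw_ac {R lP lQ c u v}. Arguments pw_E {R lP lQ c u v}.
Arguments pw_A {R lP lQ c u v u'}. Arguments pw_B {R lP lQ c u v v'}.

Theorem mainTheorem9 (R : realType) (X : finType) (P Q : X -> R) (delta : R)
  (hP : is_distr P) (hQ : is_distr Q) (hd0 : 0 < delta) (hd1 : delta < 1)
  (hov : \sum_(x : X) Num.min (P x) (Q x) < 1 - delta)
  (lamP : R)
  (hlamP : \sum_(x : X) Num.min (P x) (lamP * Q x) = 1 - delta)
  (lamQ : R)
  (hlamQ : \sum_(x : X) Num.min (Q x) (Num.min (P x) (lamP * Q x) / lamQ)
           = 1 - delta) :
  1 <= lamP /\ lamQ <= 1 /\
  forall a : R, 1 < a ->
    approx_renyi delta a P Q =
    renyi a (fun x => Num.min (P x) (lamP * Q x) / (1 - delta))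
            (fun x => Num.min (Q x) (Num.min (P x) (lamP * Q x) / lamQ)
                      / (1 - delta)).
Proof.
move: hP hQ => [P0 P1] [Q0 Q1].
have hlP : 1 < lamP.
  rewrite ltNge; apply/negP => hl.
  have : \sum_(x : X) Num.min (P x) (lamP * Q x) <= \sum_(x : X) Num.min (P x) (Q x).
    apply: ler_sum => x _; apply: le_min2 => //; exact: ler_piMl.
  lra.
have pt0 : forall x, 0 <= Num.min (P x) (lamP * Q x).
  by move=> x; rewrite le_min P0 mulr_ge0 //; lra.
have hlQ0 : 0 < lamQ.
  rewrite ltNge; apply/negP => hl.
  have : \sum_(x : X) Num.min (Q x) (Num.min (P x) (lamP * Q x) / lamQ)
         <= \sum_(x : X) (0 : R).
    apply: ler_sum => x _; rewrite ge_min; apply/orP; right.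
    by apply: mulr_ge0_le0; rewrite ?invr_le0.
  rewrite big1_eq; lra.
have hlQ1 : lamQ <= 1.
  rewrite leNgt; apply/negP => hl.
  have : \sum_(x : X) Num.min (Q x) (Num.min (P x) (lamP * Q x) / lamQ)
         <= \sum_(x : X) Num.min (P x) (Q x).
    apply: ler_sum => x _; rewrite le_min; apply/andP; split; last first.
      by rewrite ge_min lexx.
    rewrite ge_min; apply/orP; right.
    apply: le_trans (_ : Num.min (P x) (lamP * Q x) <= _); last by rewrite ge_min lexx.
    by apply: ler_piMr => //; rewrite invf_le1 ?ltW //; lra.
  lra.
split; first lra.
split; first done.
move=> a a1.
change (\sum_x ptf lamP (P x) (Q x) = 1 - delta) in hlamP.
change (\sum_x qtf lamP lamQ (P x) (Q x) = 1 - delta) in hlamQ.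
change (approx_renyi delta a P Q =
  renyi a (fun x => ptf lamP (P x) (Q x) / (1 - delta))
          (fun x => qtf lamP lamQ (P x) (Q x) / (1 - delta))).
have c0 : 0 < 1 - delta by lra.
set c := 1 - delta in hlamP hlamQ c0 *.
have Hpt0 x := pw_pt0 hlP hlQ0 hlQ1 c0 (P0 x) (Q0 x).
have Hqt0 x := pw_qt0 hlP hlQ0 hlQ1 c0 (P0 x) (Q0 x).
have HptP x : ptf lamP (P x) (Q x) <= P x by rewrite /ptf ge_min lexx.
have HqtQ x : qtf lamP lamQ (P x) (Q x) <= Q x by rewrite /qtf ge_min lexx.
set pc := fun x => ptf lamP (P x) (Q x) / c.
set qc := fun x => qtf lamP lamQ (P x) (Q x) / c.
have spc : \sum_x pc x = 1 by rewrite /pc -mulr_suml hlamP divff ?gt_eqF.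
have sqc : \sum_x qc x = 1 by rewrite /qc -mulr_suml hlamQ divff ?gt_eqF.
have acc : forall x, qc x = 0 -> pc x = 0.
  move=> x; rewrite /pc /qc => /eqP; rewrite mulf_eq0 invr_eq0 (gt_eqF c0) orbF.
  by move=> /eqP /(pw_ac hlP hlQ0 hlQ1 c0 (P0 x) (Q0 x)) ->; rewrite mul0r.
rewrite /approx_renyi; set S := (X in ereal_inf X).
have memb : S (renyi a pc qc).
  exists pc, (fun x => (P x - ptf lamP (P x) (Q x)) / delta),
         qc, (fun x => (Q x - qtf lamP lamQ (P x) (Q x)) / delta).
  split; [split; split|split; [|split]] => //.
  - by move=> x; rewrite divr_ge0 ?Hpt0 ?ltW.
  - by move=> x; rewrite divr_ge0 ?subr_ge0 ?HptP ?ltW.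
  - by rewrite -mulr_suml sumrB P1 hlamP /c; field; rewrite gt_eqF.
  - by move=> x; rewrite divr_ge0 ?Hqt0 ?ltW.
  - by move=> x; rewrite divr_ge0 ?subr_ge0 ?HqtQ ?ltW.
  - by rewrite -mulr_suml sumrB Q1 hlamQ /c; field; rewrite gt_eqF.
  - by move=> x; rewrite /pc /c; field; rewrite !gt_eqF // subr_gt0.
  - by move=> x; rewrite /qc /c; field; rewrite !gt_eqF // subr_gt0.
have feas : forall y, S y -> (renyi a pc qc <= y)%E.
  move=> y [P' [P'' [Q' [Q'' [[[d1 d1'] [d2 d2'] [d3 d3'] [d4 d4']] [dP [dQ ->]]]]]]].
  have hu' x : P' x <= P x / c.
    rewrite ler_pdivlMr // dP /c; have := d2 x; have := hd0; move=> *; nra.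
  have hv' x : Q' x <= Q x / c.
    rewrite ler_pdivlMr // dQ /c; have := d4 x; have := hd0; move=> *; nra.
  rewrite {1}/renyi ifT; last first.
    apply/forallP => x; apply/implyP => /eqP h; apply/eqP; exact: acc.
  rewrite /renyi; case: ifPn => hac; last by rewrite leey.
  have ac' : forall x, Q' x = 0 -> P' x = 0.
    by move=> x h; move/forallP: hac => /(_ x) /implyP; rewrite h eqxx => /(_ isT) /eqP.
  have le12 : \sum_x pc x `^ a * qc x `^ (1 - a) <= \sum_x P' x `^ a * Q' x `^ (1 - a).
    apply: (@sum_tangent R X a lamP lamQ pc qc P' Q'
              (fun x => rf lamP lamQ (P x) (Q x))) => //.
    - exact: ltW.
    - by rewrite d1' spc.
    - by rewrite d3' sqc.
    - by move=> x; apply: pw_E.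
    - by move=> x; apply: pw_A.
    - by move=> x; apply: pw_B.
  have pos1 : 0 < \sum_x pc x `^ a * qc x `^ (1 - a).
    rewrite lt_neqAle sumr_ge0 ?andbT; last by move=> x _; rewrite mulr_ge0 ?powR_ge0.
    apply/negP => /eqP /esym hs.
    have h := psumr_eq0P (fun x _ => mulr_ge0 (powR_ge0 _ _) (powR_ge0 _ _)) hs.
    have h0 : forall x, pc x = 0.
      move=> x; have := h x isT.
      move=> /eqP; rewrite mulf_eq0 !powR_eq0 => /orP[/andP[/eqP -> _]//|/andP[/eqP hq _]].
      exact: acc.
    by move: spc; rewrite big1 // => /eqP; rewrite eq_sym oner_eq0.
  rewrite lee_fin; apply: ler_wpM2l; first by rewrite invr_ge0; lra.
  by rewrite ler_ln ?posrE // (lt_le_trans pos1 le12).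
apply/le_anti/andP; split.
  exact: ereal_inf_lbound.
exact: le_ereal_inf_tmp.
Qed.
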